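(* Let $P_0=(|P_0|,\preccurlyeq_0)$ be a finite poset with $|P_0|=\{x_1,\dots,x_{m_0}\}$, and let $S\subseteq|P_0|$ be a chain. Fix nonnegative integer values of $m_i$ for all $i$ with $x_i\notin S$, and let $f$ be the polynomial with rational coefficients in the variables $(m_i)_{x_i\in S}$ such that $L_+(P_0;m_1,\dots,m_{m_0})=f((m_i)_{x_i\in S})$ for all nonnegative integer values of these variables. Then the total degree of $f$ equals $\sum m_i$, summed over those $i$ such that $x_i$ is $\preccurlyeq_0$-incomparable with at least one element of $S$.
   Context: For nonnegative integers $m_1,\dots,m_{m_0}$ let $C_1,\dots,C_{m_0}$ be pairwise disjoint chains, $C_i$ being $x_{i,1}<\dots<x_{i,m_i}$. The lexicographic sum $P=P_0*(C_1,\dots,C_{m_0})$ is the poset on $\bigcup_i|C_i|$ with $x_{i,j}\preccurlyeq x_{i',j'}$ iff either $i\ne i'$ and $x_i\preccurlyeq_0x_{i'}$, or $i=i'$ and $j\le j'$. $L_+(P_0;m_1,\dots,m_{m_0})$ is the number of linearizations (total orders refining $\preccurlyeq$) of $P$. When $S$ is a chain, such a polynomial $f$ exists and is unique. The total degree of a multivariable polynomial is the maximum over its monomials of the sum of the exponents. *)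

(* Defs.v *)
From HB Require Import structures.
From mathcomp Require Import all_boot all_order all_algebra.
Set Implicit Arguments. Unset Strict Implicit. Unset Printing Implicit Defensive.
Import Order.TTheory GRing.Theory Num.Theory.

(* Elements of the lexicographic sum P0 * (C_x)_x : pairs (x, j) with j < m x. *)
Definition lexsum_elt (d : Order.disp_t) (T : finPOrderType d) (m : T -> nat) :=
  {x : T & 'I_(m x)}.

Definition lexsum_le (d : Order.disp_t) (T : finPOrderType d) (m : T -> nat)
  (a b : lexsum_elt m) : bool :=
  if tag a == tag b then (nat_of_ord (tagged a) <= nat_of_ord (tagged b))%N
  else (tag a <= tag b)%O.

Definition is_linearization (U : finType) (le : rel U) (R : {ffun U * U -> bool}) : bool :=
  [&& [forall a, R (a, a)],
      [forall a, forall b, R (a, b) && R (b, a) ==> (a == b)],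
      [forall a, forall b, forall c, R (a, b) && R (b, c) ==> R (a, c)],
      [forall a, forall b, R (a, b) || R (b, a)] &
      [forall a, forall b, le a b ==> R (a, b)]].

Definition Lplus (d : Order.disp_t) (T : finPOrderType d) (m : T -> nat) : nat :=
  #|[pred R : {ffun lexsum_elt m * lexsum_elt m -> bool} |
      is_linearization (@lexsum_le d T m) R]|.

(* Multivariate polynomials with rational coefficients in variables indexed by
   a finite type V: a finite list of (exponent vector, coefficient) terms. *)
Definition mpoly (V : finType) := seq ({ffun V -> nat} * rat).

Definition mcoef (V : finType) (f : mpoly V) (e : {ffun V -> nat}) : rat :=
  (\sum_(p <- f | p.1 == e) p.2)%R.

Definition mdeg (V : finType) (f : mpoly V) : nat :=
  \max_(p <- f | mcoef f p.1 != 0%R) \sum_(v : V) p.1 v.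

Definition meval (V : finType) (f : mpoly V) (x : V -> nat) : rat :=
  (\sum_(p <- f) p.2 * \prod_(v : V) ((x v)%:R ^+ p.1 v))%R.

Definition vars_in (V : finType) (f : mpoly V) (S : {set V}) : bool :=
  all (fun p : {ffun V -> nat} * rat => [forall v, (v \notin S) ==> (p.1 v == 0%N)]) f.

(* Main.v *)
Require Import Defs.
From HB Require Import structures.
From mathcomp Require Import all_boot all_order all_algebra.
From mathcomp Require Import zify ring lra.
Set Implicit Arguments. Unset Strict Implicit. Unset Printing Implicit Defensive.
Import Order.TTheory GRing.Theory Num.Theory.

Section Lin.
Variables (U : finType) (le : rel U).

Lemma lin_forced (R : {ffun U * U -> bool}) a b :
  is_linearization le R -> le a b || le b a -> R (a, b) = le a b.
Proof.
case/and5P=> _ /forallP antis _ /forallP tot /forallP refi.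
case lab: (le a b) => /=.
  by move=> _; move/forallP: (refi a) => /(_ b)/implyP; apply.
move=> lba; apply/negP=> Rab.
have Rba : R (b, a) by move/forallP: (refi b) => /(_ a)/implyP; apply.
move/forallP: (antis a) => /(_ b)/implyP.
by rewrite Rab Rba => /(_ isT)/eqP eab; subst b; rewrite lab in lba.
Qed.

Lemma lin_antisym (R : {ffun U * U -> bool}) a b :
  is_linearization le R -> a != b -> R (a, b) = ~~ R (b, a).
Proof.
case/and5P=> _ /forallP antis _ /forallP tot _ nab.
case Rab: (R (a, b)).
  apply/esym/negP=> Rba.
  move/forallP: (antis a) => /(_ b)/implyP; rewrite Rab Rba => /(_ isT) eab.
  by rewrite eab in nab.
by move/forallP: (tot a) => /(_ b); rewrite Rab /= => ->.
Qed.

Lemma lin_trans (R : {ffun U * U -> bool}) a b c :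
  is_linearization le R -> R (a, b) -> R (b, c) -> R (a, c).
Proof.
case/and5P=> _ _ /forallP tr _ _ Rab Rbc.
by move/forallP: (tr a) => /(_ b)/forallP/(_ c)/implyP; rewrite Rab Rbc; apply.
Qed.

Lemma lin_refine (R : {ffun U * U -> bool}) a b :
  is_linearization le R -> le a b -> R (a, b).
Proof. by case/and5P=> _ _ _ _ /forallP refi; move/forallP: (refi a) => /(_ b)/implyP. Qed.

Lemma lin_tot (R : {ffun U * U -> bool}) a b :
  is_linearization le R -> R (a, b) || R (b, a).
Proof. by case/and5P=> _ _ _ /forallP tot _; move/forallP: (tot a) => /(_ b). Qed.

Definition lin_of_key (k : U -> nat) : {ffun U * U -> bool} :=
  [ffun p => k p.1 <= k p.2].

Lemma lin_of_keyP k : injective k -> (forall a b, le a b -> k a <= k b) ->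
  is_linearization le (lin_of_key k).
Proof.
move=> kinj kmono; apply/and5P; split; apply/forallP=> a; rewrite ?ffunE //=.
- apply/forallP=> b; rewrite !ffunE /=; apply/implyP=> /andP[h1 h2].
  by apply/eqP/kinj/eqP; rewrite eqn_leq h1 h2.
- apply/forallP=> b; apply/forallP=> c; rewrite !ffunE /=; apply/implyP=> /andP[h1 h2].
  exact: leq_trans h1 h2.
- by apply/forallP=> b; rewrite !ffunE /=; exact: leq_total.
- by apply/forallP=> b; apply/implyP=> h; rewrite ffunE /=; apply: kmono.
Qed.

Lemma downset_eq (R R' : {ffun U * U -> bool}) (A : {set U}) b :
  is_linearization le R -> is_linearization le R' ->
  (forall e e', e \in A -> e' \in A -> le e e' || le e' e) ->
  #|[set e in A | R (e, b)]| = #|[set e in A | R' (e, b)]| ->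
  [set e in A | R (e, b)] = [set e in A | R' (e, b)].
Proof.
move=> linR linR' chA.
suff gen: forall (R1 R2 : {ffun U * U -> bool}), is_linearization le R1 ->
  is_linearization le R2 -> forall e, e \in A -> R1 (e, b) -> ~~ R2 (e, b) ->
  #|[set e in A | R2 (e, b)]| < #|[set e in A | R1 (e, b)]|.
  move=> hc; apply/setP=> e; rewrite !inE.
  case eA: (e \in A) => //=.
  case h1: (R (e, b)); case h2: (R' (e, b)) => //.
    by have := gen _ _ linR linR' e eA h1 (negbT h2); rewrite hc ltnn.
  by have := gen _ _ linR' linR e eA h2 (negbT h1); rewrite hc ltnn.
move=> R1 R2 l1 l2 e eA R1e nR2e.
have sub: [set e' in A | R2 (e', b)] \subset [set e' in A | R1 (e', b)] :\ e.
  apply/subsetP=> e'; rewrite !inE => /andP[e'A R2e'].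
  have ne : e' != e by apply/eqP=> ee; subst e'; rewrite R2e' in nR2e.
  rewrite ne e'A /=.
  have R2be : R2 (b, e).
    by have := lin_tot e b l2; rewrite (negbTE nR2e).
  have R2e'e := lin_trans l2 R2e' R2be.
  have := chA _ _ e'A eA => cmp.
  have := lin_forced l2 cmp; rewrite R2e'e => /esym le'e.
  have R1e'e : R1 (e', e) by rewrite (lin_forced l1 cmp).
  exact: lin_trans l1 R1e'e R1e.
apply: (leq_ltn_trans (subset_leq_card sub)).
rewrite (cardsD1 e [set e' in A | R1 (e', b)]) inE eA R1e /=.
by rewrite add1n ltnS.
Qed.

End Lin.
Section Chain.
Variables (d : Order.disp_t) (T : finPOrderType d) (S : {set T}).
Hypothesis hS : forall a b, a \in S -> b \in S -> (a >=< b)%O.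

Definition Icond i := [exists s in S, ~~ (i >=< s)%O].
Definition aa i := #|[set s in S | (s < i)%O]|.
Definition bb i := #|[set s in S | ~~ (i < s)%O]|.

Lemma Icond_notS i : Icond i -> i \notin S.
Proof.
case/existsP=> s /andP[sS nc]; apply/negP=> iS.
by rewrite hS in nc.
Qed.

Lemma c1 s i : s \in S -> (s < i)%O -> aa s < aa i.
Proof.
move=> sS si; apply: proper_card; apply/properP; split.
  apply/subsetP=> u; rewrite !inE => /andP[-> us] /=; exact: lt_trans us si.
by exists s; rewrite !inE ?sS ?si ?ltxx ?andbF.
Qed.

Lemma c2 s i : s \in S -> (i < s)%O -> bb i <= aa s.
Proof.
move=> sS is_; apply: subset_leq_card; apply/subsetP=> u; rewrite !inE.
case/andP=> uS niu; rewrite uS /=.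
case: (comparable_ltgtP (hS uS sS)) => // [su|eus].
  by rewrite (lt_trans is_ su) in niu.
by rewrite eus is_ in niu.
Qed.

Lemma c3 i : aa i <= bb i.
Proof.
apply: subset_leq_card; apply/subsetP=> u; rewrite !inE.
by case/andP=> -> ui; rewrite lt_gtF.
Qed.

Lemma c4 i : i \notin S -> ~~ Icond i -> bb i <= aa i.
Proof.
move=> iS nI; apply: subset_leq_card; apply/subsetP=> u; rewrite !inE.
case/andP=> uS niu; rewrite uS /=.
have cmp : (i >=< u)%O.
  apply/negPn/negP=> nc; move/negP: nI; apply; apply/existsP; exists u.
  by rewrite uS.
case: (comparable_ltgtP cmp) => // [iu|eiu]; first by rewrite iu in niu.
by rewrite eiu uS in iS.
Qed.

Lemma c5 i : Icond i -> aa i < bb i.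
Proof.
case/existsP=> s /andP[sS nc].
apply: proper_card; apply/properP; split.
  apply/subsetP=> u; rewrite !inE.
  by case/andP=> -> ui; rewrite lt_gtF.
exists s; rewrite !inE sS /=.
  by apply/negP=> is_; move/negP: nc; apply; rewrite /Order.comparable ltW.
apply/negP=> si; move/negP: nc; apply; rewrite /Order.comparable.
by rewrite (ltW si) orbT.
Qed.

Lemma c6a i i' : (i < i')%O -> aa i <= aa i'.
Proof.
move=> ii'; apply: subset_leq_card; apply/subsetP=> u; rewrite !inE.
by case/andP=> -> ui /=; exact: lt_trans ui ii'.
Qed.

Lemma c6b i i' : (i < i')%O -> bb i <= bb i'.
Proof.
move=> ii'; apply: subset_leq_card; apply/subsetP=> u; rewrite !inE.
case/andP=> -> niu /=; apply/negP=> i'u; move/negP: niu; apply.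
exact: lt_trans ii' i'u.
Qed.

Lemma min_witness i : Icond i ->
  exists2 s, s \in S & (~~ (i >=< s)%O) && (aa s == aa i).
Proof.
move=> Ii; have iS := Icond_notS Ii.
case/existsP: (Ii) => s0 /andP[s0S nc0].
have P0 : (s0 \in S) && ~~ (i >=< s0)%O by rewrite s0S.
case: (@arg_minnP _ s0 (fun s => (s \in S) && ~~ (i >=< s)%O) aa P0) => s /andP[sS nc] smin.
exists s => //; rewrite nc /=; apply/eqP/eq_card => u; rewrite !inE.
case uS: (u \in S) => //=.
apply/idP/idP => [us|ui].
  case: (boolP (i >=< u)%O) => [cmp|ncu].
    case: (comparable_ltgtP cmp) => // [iu|eiu].
      by move/negP: nc; case; rewrite /Order.comparable (ltW (lt_trans iu us)).
    by rewrite eiu uS in iS.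
  have := smin u; rewrite uS ncu => /(_ isT).
  by rewrite leqNgt (c1 uS us).
case: (comparable_ltgtP (hS uS sS)) => // [su|eus].
  by move/negP: nc; case; rewrite /Order.comparable (ltW (lt_trans su ui)) orbT.
by move/negP: nc; case; rewrite /Order.comparable -eus (ltW ui) orbT.
Qed.

End Chain.

Lemma aux_lt1 c c' n r r' : c < c' -> r < n -> c * n + r < c' * n + r'.
Proof. nia. Qed.
Lemma aux_lt2 c n r : c <= n -> r < n -> c * n + r < n * n + n.
Proof. nia. Qed.

Section Rank.
Variables (d : Order.disp_t) (T : finPOrderType d).

Definition rk (i : T) := #|[set u | (u < i)%O]| * #|T| + enum_rank i.

Lemma rk_mono i i' : (i < i')%O -> rk i < rk i'.
Proof.
move=> ii'; rewrite /rk; apply: aux_lt1; last exact: ltn_ord.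
apply: proper_card; apply/properP; split.
  by apply/subsetP=> u; rewrite !inE => ui; exact: lt_trans ui ii'.
by exists i; rewrite !inE ?ii' ?ltxx.
Qed.

Lemma rk_lt i : rk i < #|T| * #|T| + #|T|.
Proof. by rewrite /rk; apply: aux_lt2; [exact: max_card | exact: ltn_ord]. Qed.

Lemma rk_inj : injective rk.
Proof.
move=> i i'; rewrite /rk => e.
have er := ltn_ord (enum_rank i); have er' := ltn_ord (enum_rank i').
have : (#|[set u | (u < i)%O]| * #|T| + enum_rank i) %% #|T| =
       (#|[set u | (u < i')%O]| * #|T| + enum_rank i') %% #|T| by rewrite e.
rewrite !modnMDl !modn_small // => /val_inj; exact: enum_rank_inj.
Qed.

End Rank.

Section Card.
Variables (I : finType) (x : I -> nat).

Lemma Tagged_inj (i : I) : injective (@Tagged I i (fun i => 'I_(x i))).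
Proof.
move=> y1 y2 /(congr1 (tagged_as (Tagged (fun i => 'I_(x i)) y1))).
by rewrite !tagged_asE.
Qed.

Lemma card_tag_eq (i : I) :
  #|[pred a : {i : I & 'I_(x i)} | tag a == i]| = x i.
Proof.
rewrite -[RHS](card_ord (x i)) -(card_imset _ (@Tagged_inj i)).
apply: eq_card=> a; rewrite inE; apply/idP/imsetP.
  by case: a => j y /= /eqP eji; subst j; exists y.
by case=> y _ ->.
Qed.

Lemma card_tag_pred (P : pred I) :
  #|[pred a : {i : I & 'I_(x i)} | P (tag a)]| = \sum_(i | P i) x i.
Proof.
rewrite -sum1_card (partition_big (fun a : {i : I & 'I_(x i)} => tag a) P) //=.
apply: eq_bigr => i Pi; rewrite -(card_tag_eq i) -sum1_card.
by apply: eq_bigl=> a; rewrite !inE; case: eqP => [->|]; rewrite ?Pi ?andbF ?andbT.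
Qed.

End Card.

Lemma card_ltn_ord (n k : nat) : k <= n -> #|[pred j : 'I_n | j < k]| = k.
Proof.
move=> kn; rewrite -sum1_card.
rewrite (eq_bigl (fun j : 'I_n => j < k)) //.
by rewrite (big_ord_narrow kn) /= sum1_card card_ord.
Qed.

Section Main.
Variables (d : Order.disp_t) (T : finPOrderType d) (S : {set T}).
Hypothesis hS : forall a b, a \in S -> b \in S -> (a >=< b)%O.
Variable m : T -> nat.

Local Notation Mx := (\max_(i : T) m i).+1.

Lemma m_lt_Mx i : m i < Mx.
Proof. by rewrite ltnS; exact: (leq_bigmax i). Qed.

Definition QIp := [pred p : T * 'I_Mx | Icond S p.1 && (p.2 < m p.1)].
Definition QI := {p : T * 'I_Mx | QIp p}.
Definition Dsum := \sum_(i | Icond S i) m i.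

Lemma card_QI : #|{: QI}| = Dsum.
Proof.
rewrite card_sig -sum1_card /Dsum.
rewrite (eq_bigl (fun p : T * 'I_Mx => Icond S p.1 && (p.2 < m p.1))) //.
rewrite -(pair_big_dep (fun i => Icond S i) (fun i (j : 'I_Mx) => j < m i) (fun _ _ => 1)) /=.
apply: eq_bigr => i _; rewrite sum1_card card_ltn_ord //.
exact: ltnW (m_lt_Mx i).
Qed.


Section UB.
Variable x : T -> nat.
Hypothesis hx : forall i, i \notin S -> x i = m i.
Local Notation E := (lexsum_elt x).
Local Notation le := (@lexsum_le d T x).

Definition enc (a : E) : T * 'I_Mx := (tag a, inord (tagged a)).

Lemma enc_val (a : E) : tag a \notin S -> nat_of_ord (enc a).2 = tagged a.
Proof.
move=> aS; rewrite /enc /= inordK //.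
have := ltn_ord (tagged a); move: (nat_of_ord (tagged a)) => k.
rewrite hx // => h; exact: ltn_trans h (m_lt_Mx _).
Qed.

Lemma sig_eq (a b : E) : tag a = tag b -> nat_of_ord (tagged a) = nat_of_ord (tagged b) -> a = b.
Proof.
case: a => i j; case: b => i' j' /= eii'; subst i'.
by move=> /val_inj ->.
Qed.

Lemma enc_inj (a b : E) : tag a \notin S -> tag b \notin S -> enc a = enc b -> a = b.
Proof.
move=> aS bS e; apply: sig_eq; first by have := congr1 fst e.
by rewrite -enc_val // -enc_val // e.
Qed.

Definition SA := [set e : E | tag e \in S].
Definition NS := #|SA|.

Definition cntset (R : {ffun E * E -> bool}) (q : QI) :=
  [set e : E | (tag e \in S) &&
     [exists a : E, [&& tag a \notin S, enc a == val q & R (e, a)]]].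

Definition code2 (R : {ffun E * E -> bool}) : {ffun (T * 'I_Mx) * (T * 'I_Mx) -> bool} :=
  [ffun pq => [exists a : E, [exists b : E,
     [&& tag a \notin S, tag b \notin S, enc a == pq.1, enc b == pq.2 & R (a, b)]]]].

Definition cnt (R : {ffun E * E -> bool}) : {ffun QI -> 'I_NS.+1} :=
  [ffun q => inord #|cntset R q|].

Definition Gcode R := (code2 R, cnt R).

Lemma code2E R a b : tag a \notin S -> tag b \notin S -> code2 R (enc a, enc b) = R (a, b).
Proof.
move=> aS bS; rewrite ffunE /=; apply/existsP/idP.
  case=> a' /existsP[b' /and5P[a'S b'S /eqP ea /eqP eb Rab]].
  by rewrite -(enc_inj a'S aS ea) -(enc_inj b'S bS eb).
by move=> Rab; exists a; apply/existsP; exists b; rewrite aS bS !eqxx Rab.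
Qed.

Lemma cntsetE R (b : E) (q : QI) : tag b \notin S -> val q = enc b ->
  cntset R q = [set e in SA | R (e, b)].
Proof.
move=> bS qb; apply/setP=> e; rewrite !inE; congr (_ && _).
apply/existsP/idP.
  by case=> a /and3P[aS /eqP ea Rea]; rewrite -(enc_inj aS bS (etrans ea qb)).
by move=> Reb; exists b; rewrite bS qb eqxx Reb.
Qed.

Lemma le_SA (a b : E) : tag a \in S -> tag b \in S -> le a b || le b a.
Proof.
move=> aS bS; rewrite /lexsum_le eq_sym.
case: eqP => _; first exact: leq_total.
by have := hS aS bS.
Qed.

Lemma le_nonI (a b : E) : tag a \in S -> tag b \notin S -> ~~ Icond S (tag b) ->
  le a b || le b a.
Proof.
move=> aS bS nI; rewrite /lexsum_le.
have ne : (tag a == tag b) = false by apply/negbTE/negP=> /eqP e; rewrite -e aS in bS.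
rewrite ne eq_sym ne.
apply/negPn/negP=> nc; move/negP: nI; apply; apply/existsP; exists (tag a).
rewrite aS /=; rewrite /Order.comparable orbC; exact: nc.
Qed.

Lemma UB_pair R R' a b : is_linearization le R -> is_linearization le R' ->
  Gcode R = Gcode R' -> tag a \in S -> tag b \notin S -> R (a, b) = R' (a, b).
Proof.
move=> lR lR' eG aS bS.
case: (boolP (Icond S (tag b))) => Ib; last first.
  by have cmp := le_nonI aS bS Ib; rewrite (lin_forced lR cmp) (lin_forced lR' cmp).
have qP : QIp (enc b) by rewrite /QIp inE /= Ib enc_val // -hx // ltn_ord.
pose q : QI := exist _ (enc b) qP.
have ch : forall e e', e \in SA -> e' \in SA -> le e e' || le e' e.
  by move=> e e'; rewrite !inE; exact: le_SA.
have ec : #|[set e in SA | R (e, b)]| = #|[set e in SA | R' (e, b)]|.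
  have e2 := congr1 snd eG.
  have := congr1 (fun F : {ffun QI -> 'I_NS.+1} => nat_of_ord (F q)) e2.
  rewrite /= !ffunE.
  have qv : val q = enc b by [].
  have b1 : forall R0 : {ffun E * E -> bool}, #|[set e in SA | R0 (e, b)]| < NS.+1.
    move=> R0; rewrite ltnS; apply: subset_leq_card.
    by apply/subsetP=> e; rewrite inE => /andP[].
  rewrite (cntsetE R bS qv) (cntsetE R' bS qv).
  by rewrite !inordK.
by have := downset_eq lR lR' ch ec => /setP/(_ a); rewrite !inE aS.
Qed.

Lemma UB_inj R R' : is_linearization le R -> is_linearization le R' ->
  Gcode R = Gcode R' -> R = R'.
Proof.
move=> lR lR' eG; apply/ffunP=> -[a b].
case: (boolP (tag a \in S)) => aS; case: (boolP (tag b \in S)) => bS.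
- by have cmp := le_SA aS bS; rewrite (lin_forced lR cmp) (lin_forced lR' cmp).
- exact: UB_pair.
- have ne : a != b by apply/eqP=> e; rewrite e bS in aS.
  by rewrite (lin_antisym lR ne) (lin_antisym lR' ne) (UB_pair lR lR' eG bS aS).
- by rewrite -!code2E //; have := congr1 fst eG => /= ->.
Qed.

Lemma UB : Lplus x <= 2 ^ #|{: (T * 'I_Mx) * (T * 'I_Mx)}| * NS.+1 ^ Dsum.
Proof.
rewrite /Lplus.
have := @leq_card_in _ _ Gcode [pred R : {ffun E * E -> bool} | is_linearization le R].
rewrite card_prod !card_ffun card_bool card_ord card_QI; apply.
by move=> R R'; rewrite !inE; exact: UB_inj.
Qed.

End UB.



Lemma key_le1 p p' s s' K : p < p' -> s < K -> p * K + s <= p' * K + s'.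
Proof. nia. Qed.
Lemma key_le2 p p' s s' K : p <= p' -> s <= s' -> p * K + s <= p' * K + s'.
Proof. nia. Qed.
Lemma key_leE p p' s s' K : p != p' -> s < K -> s' < K ->
  (p * K + s <= p' * K + s') = (p < p').
Proof.
move=> /negP ne sK s'K; case: (ltngtP p p') => h.
- by apply: key_le1.
- by apply/negP => h2; nia.
- by case: ne; apply/eqP.
Qed.
Lemma divmod_eq p p' s s' K : s < K -> s' < K -> p * K + s = p' * K + s' -> p = p' /\ s = s'.
Proof.
move=> sK s'K e.
have e1 : (p * K + s) %/ K = (p' * K + s') %/ K by rewrite e.
have e2 : (p * K + s) %% K = (p' * K + s') %% K by rewrite e.
have K0 : 0 < K by exact: leq_ltn_trans (leq0n s) sK.
by rewrite !divnMDl // !divn_small // !addn0 in e1; rewrite !modnMDl !modn_small in e2.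
Qed.

Section LB.
Variable B : nat.
Hypothesis B0 : 0 < B.

Local Notation Mx := (\max_(i : T) m i).+1.
Definition R0 := #|T| * #|T| + #|T|.
Definition Kc := R0 * Mx.
Definition tt := Kc * B.
Definition xB i := if i \in S then tt else m i.
Local Notation E := (lexsum_elt xB).
Local Notation le := (@lexsum_le d T xB).

Lemma xB_notS i : i \notin S -> xB i = m i.
Proof. by rewrite /xB => /negbTE ->. Qed.

Definition ctot (c : {ffun QI -> 'I_B}) (i : T) (j : nat) : nat :=
  if (insub (i, inord j : 'I_Mx) : option QI) is Some q then val (c q) else 0.

Lemma ctot_lt c i j : ctot c i j < B.
Proof. by rewrite /ctot; case: insub => [q|] //; exact: ltn_ord. Qed.

Lemma ctotE c (q : QI) : ctot c (val q).1 (val q).2 = val (c q).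
Proof. by rewrite /ctot inord_val -surjective_pairing valK. Qed.

Definition oo c (a : E) :=
  if Icond S (tag a) then (rk (tag a) * Mx + tagged a) * B + ctot c (tag a) (tagged a) else 0.
Definition prim c (a : E) :=
  if tag a \in S then (aa S (tag a) * tt + tagged a).*2.+1
  else (aa S (tag a) * tt + oo c a).*2.
Definition sec (a : E) := if tag a \in S then 0 else rk (tag a) * Mx + tagged a.
Definition key c (a : E) := prim c a * Kc + sec a.

Lemma Kc_gt0 (a : E) : 0 < Kc.
Proof.
have n0 : 0 < #|T| by apply/card_gt0P; exists (tag a).
rewrite /Kc /R0; move: n0; move: #|T| (\max_(i : T) m i) => n M; nia.
Qed.

Lemma tagged_lt (a : E) : tag a \notin S -> tagged a < m (tag a).
Proof.
move=> aS; have := ltn_ord (tagged a); move: (nat_of_ord (tagged a)) => k.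
by rewrite xB_notS.
Qed.

Lemma sec_lt (a : E) : sec a < Kc.
Proof.
rewrite /sec; case: ifP => aS; first exact: Kc_gt0.
have h1 := rk_lt (tag a); have h2 := tagged_lt (negbT aS).
have h3 := m_lt_Mx (tag a).
rewrite /Kc /R0; move: h1 h2 h3; move: (rk (tag a)) (nat_of_ord (tagged a)) (m (tag a)).
move: (#|T| * #|T| + #|T|) => r; nia.
Qed.

Lemma oo_lt c (a : E) : tag a \notin S -> oo c a < tt.
Proof.
move=> aS; rewrite /oo /tt; case: ifP => _; last by rewrite muln_gt0 (Kc_gt0 a).
have h1 := rk_lt (tag a); have h2 := tagged_lt aS.
have h3 := m_lt_Mx (tag a); have h4 := ctot_lt c (tag a) (tagged a).
rewrite /Kc /R0; move: h1 h2 h3 h4.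
move: (rk (tag a)) (nat_of_ord (tagged a)) (m (tag a)) (ctot c (tag a) (tagged a)).
move: (#|T| * #|T| + #|T|) => r; nia.
Qed.


Lemma key_mono c a b : le a b -> key c a <= key c b.
Proof.
have Kp := Kc_gt0 a.
case: a => i j; case: b => i' j'; rewrite /lexsum_le /key /prim /sec /oo /=.
case: eqP => [eii' jj|nii' ii'].
  subst i'; case: (boolP (i \in S)) => iS.
    by apply: key_le2 => //; rewrite ltnS leq_double leq_add2l.
  case: (boolP (Icond S i)) => Ii; last first.
    by apply: key_le2 => //; rewrite leq_add2l.
  apply: key_le2; last by rewrite leq_add2l.
  rewrite leq_double leq_add2l.
  case: (ltngtP j j') jj => // [lj|ej] _.
    have := ctot_lt c i j; move: (ctot c i j) (ctot c i j') lj.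
    move: (nat_of_ord j) (nat_of_ord j') (rk i * Mx) => u u' r v v'; nia.
  by rewrite ej.
have lt : (i < i')%O by rewrite lt_neqAle ii' andbT; apply/eqP.
have Kc0 : 0 < Kc := Kp.
have tt0 : 0 < tt by rewrite /tt muln_gt0 Kc0.
have hj : (nat_of_ord j) < (if i \in S then tt else m i) := ltn_ord j.
have hj' : (nat_of_ord j') < (if i' \in S then tt else m i') := ltn_ord j'.
case: (boolP (i \in S)) => iS; case: (boolP (i' \in S)) => i'S.
- apply: key_le1; last by [].
  have := c1 iS lt; rewrite iS i'S in hj hj'; move: hj hj'.
  rewrite -!muln2; move: (aa S i) (aa S i') (nat_of_ord j) (nat_of_ord j') tt.
  move=> A A' u u' t h1 h2 h3; nia.
- apply: key_le1; last by [].
  have := c1 iS lt; rewrite iS in hj; move: hj.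
  have := @oo_lt c (existT _ i' j') i'S; rewrite /oo /=.
  rewrite -!muln2; move: (if Icond S i' then _ else _) => o.
  move: (aa S i) (aa S i') (nat_of_ord j) tt => A A' u t h0 h1 h2; nia.
- apply: key_le1; last first.
    have := sec_lt (existT _ i j); by rewrite /sec /= (negbTE iS).
  have h2 := c2 hS i'S lt.
  have h3 : aa S i * tt + (if Icond S i then (rk i * Mx + j) * B + ctot c i j else 0)
            <= bb S i * tt.
    have := @oo_lt c (existT _ i j) iS; rewrite /oo /=.
    case: (boolP (Icond S i)) => Ii.
      have := c5 Ii; move: (aa S i) (bb S i) tt ((rk i * Mx + j) * B + ctot c i j).
      move=> A Bb t o h4 h5; nia.
    have := c3 S i; move: (aa S i) (bb S i) tt => A Bb t h4 _; nia.
  rewrite -!muln2; move: h3 h2; move: (if Icond S i then _ else _) => o.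
  move: (aa S i) (bb S i) (aa S i') (nat_of_ord j') tt => A Bb A' u t h3 h4; nia.
- have hr := rk_mono lt.
  have hji : j < m i by move: hj; rewrite (negbTE iS).
  have hmi := m_lt_Mx i.
  apply: key_le2; last first.
    move: hr hji hmi; move: (rk i) (rk i') (nat_of_ord j) (m i) Mx => r r' u mi M; nia.
  rewrite leq_double.
  have ha := c6a S lt.
  have o1 := @oo_lt c (existT _ i j) iS; rewrite /oo /= in o1.
  have o2 := @oo_lt c (existT _ i' j') i'S; rewrite /oo /= in o2.
  case: (ltngtP (aa S i) (aa S i')) ha => // [hl|he] _.
    move: o1 o2 hl; move: (if Icond S i then _ else _) (if Icond S i' then _ else _).
    move: (aa S i) (aa S i') tt => A A' t o o'; nia.
  rewrite he leq_add2l.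
  case: (boolP (Icond S i)) => Ii; last by [].
  case: (boolP (Icond S i')) => Ii'; last first.
    have := c4 i'S Ii'; have := c5 Ii; have := c6b S lt; rewrite he.
    move: (aa S i') (bb S i) (bb S i') => A Bb Bb'; lia.
  have := ctot_lt c i j.
  move: hr hji hmi; move: (rk i) (rk i') (nat_of_ord j) (m i) Mx (ctot c i j) (ctot c i' j').
  move=> r r' u mi M v v' h1 h2 h3 h4.
  have h5 : (r * M + u).+1 <= r' * M + j' by nia.
  have h6 : (r * M + u).+1 * B <= (r' * M + j') * B by rewrite leq_mul2r h5 orbT.
  rewrite mulSn in h6; lia.
Qed.


Lemma key_inj c : injective (key c).
Proof.
move=> a b e.
have [ep es] := divmod_eq (sec_lt a) (sec_lt b) e.
move: ep es; clear e; case: a => i j; case: b => i' j'; rewrite /prim /sec /oo /=.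
have hj : (nat_of_ord j) < (if i \in S then tt else m i) := ltn_ord j.
have hj' : (nat_of_ord j') < (if i' \in S then tt else m i') := ltn_ord j'.
case: (boolP (i \in S)) => iS; case: (boolP (i' \in S)) => i'S.
- move=> /succn_inj /double_inj ep _.
  rewrite iS in hj; rewrite i'S in hj'.
  have [eA ej] := divmod_eq hj hj' ep.
  have eii : i = i'.
    case: (comparable_ltgtP (hS iS i'S)) => // h.
      by have := c1 iS h; rewrite eA ltnn.
    by have := c1 i'S h; rewrite eA ltnn.
  subst i'; by apply: sig_eq.
- by move=> /(congr1 odd); rewrite /= !odd_double.
- by move=> /(congr1 odd); rewrite /= !odd_double.
- move=> _ es.
  rewrite (negbTE iS) in hj; rewrite (negbTE i'S) in hj'.
  have h1 := ltn_trans hj (m_lt_Mx i); have h2 := ltn_trans hj' (m_lt_Mx i').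
  have [er ej] := divmod_eq h1 h2 es.
  have eii := rk_inj er; subst i'.
  by apply: sig_eq.
Qed.


Definition Lc c := lin_of_key (key c).

Lemma Lc_lin c : is_linearization le (Lc c).
Proof. apply: lin_of_keyP; [exact: key_inj | exact: key_mono]. Qed.

Lemma Lc_inj : injective Lc.
Proof.
move=> c c' eL; apply/ffunP => q; apply/val_inj/eqP; apply/negP => ne.
case: q ne => [[i jo] qP] /= ne; move: (qP); rewrite /QIp inE /= => /andP[Ii jm].
have iS := Icond_notS hS Ii.
have jb : jo < xB i by rewrite xB_notS.
pose b : E := existT _ i (Ordinal jb).
have ooE : forall c0 : {ffun QI -> 'I_B},
    oo c0 b = (rk i * Mx + jo) * B + c0 (exist _ (i, jo) qP).
  move=> c0; rewrite /oo /= Ii; congr (_ + _).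
  by have := ctotE c0 (exist _ (i, jo) qP).
case: (min_witness hS Ii) => s sS /andP[nc /eqP eas].
set u := minn (oo c b) (oo c' b).
have ut : u < xB s.
  rewrite /xB sS /u; have := @oo_lt c b iS; lia.
pose e : E := existT _ s (Ordinal ut).
have kE : forall c0 : {ffun QI -> 'I_B}, Lc c0 (e, b) = (u < oo c0 b).
  move=> c0; rewrite /Lc /lin_of_key ffunE /= /key key_leE ?sec_lt //.
    by rewrite /prim /= sS (negbTE iS) eas ltn_Sdouble ltn_add2l.
  rewrite /prim /= sS (negbTE iS); apply/negP => /eqP /(congr1 odd).
  by rewrite /= !odd_double.
have := kE c; rewrite eL kE !ooE /u !ooE.
move: ne; move: (nat_of_ord (c _)) (nat_of_ord (c' _)) => v v' ne; lia.
Qed.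

Lemma LB : B ^ Dsum <= Lplus xB.
Proof.
have sub : [set Lc c | c : {ffun QI -> 'I_B}] \subset
           [pred R : {ffun E * E -> bool} | is_linearization le R].
  by apply/subsetP => R /imsetP[c _ ->]; rewrite inE; exact: Lc_lin.
have := subset_leq_card sub; rewrite card_imset; last exact: Lc_inj.
by rewrite cardT -cardE card_ffun card_ord card_QI.
Qed.

End LB.
End Main.
Lemma growth (a C : rat) (P : nat) : (0 < a)%R ->
  (forall t : nat, 0 < t -> (a * t%:R ^+ P.+1 <= C * t%:R ^+ P)%R) -> False.
Proof.
move=> a0 h.
have c0 : (0 <= `|C| / a)%R by rewrite divr_ge0 ?normr_ge0 // ltW.
have := archi_boundP c0; set t := Num.bound _ => tb.
have t0 : 0 < t.
  by rewrite lt0n; apply/eqP => t0; move: tb; rewrite t0 /=; rewrite ltNge c0.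
have := h t t0; rewrite exprS.
have tp : (0 < t%:R ^+ P :> rat)%R by rewrite exprn_gt0 // ltr0n.
have Ct : (C < a * t%:R)%R.
  move: tb; set q := (`|C| / a)%R => tb.
  have hq : (`|C| = q * a)%R by rewrite /q divfK // lt0r_neq0.
  have := real_ler_norm (num_real C); rewrite hq; move: (t%:R : rat) tb => tr tb hC; nra.
set y := (t%:R ^+ P : rat) in tp *.
move=> hh; have : (C * y < a * t%:R * y)%R by rewrite ltr_pM2r.
by rewrite -mulrA ltNge hh.
Qed.

Lemma sum_partition (X : eqType) (Y : eqType) (s : seq X) (k : X -> Y) (G : X -> rat) :
  (\sum_(p <- s) G p = \sum_(u <- undup (map k s)) \sum_(p <- s | k p == u) G p)%R.
Proof.
under [RHS]eq_bigr => u _ do rewrite big_mkcond.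
rewrite exchange_big /=; apply: eq_big_seq => p ps.
rewrite -big_mkcond /= big_const_seq.
have -> : count (fun u => k p == u) (undup (map k s)) = 1%N.
  rewrite (eq_count (a2 := pred1 (k p))); last by move=> u; rewrite /= eq_sym.
  by rewrite count_uniq_mem ?undup_uniq // mem_undup map_f.
by rewrite /= addr0.
Qed.

Section Poly.
Variables (T : finType) (S : {set T}) (f : mpoly T).
Hypothesis hf : vars_in f S.

Definition mono (u : {ffun T -> nat}) (x : T -> nat) : rat :=
  (\prod_v ((x v)%:R ^+ u v))%R.
Definition degu (u : {ffun T -> nat}) : nat := \sum_v u v.
Definition Zs := [seq u <- undup (unzip1 f) | mcoef f u != 0%R].

Lemma meval_Z x : meval f x = (\sum_(u <- Zs) mcoef f u * mono u x)%R.
Proof.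
rewrite /meval (sum_partition _ (fun p : {ffun T -> nat} * rat => p.1)) /Zs big_filter.
rewrite [RHS]big_mkcond /=; apply: eq_bigr => u _.
have -> : (\sum_(p <- f | p.1 == u) p.2 * \prod_v (x v)%:R ^+ p.1 v =
          mcoef f u * mono u x)%R.
  rewrite /mcoef big_distrl /=; apply: eq_bigr => p /eqP ->; by [].
by case: eqP => // ->; rewrite mul0r.
Qed.

Lemma mdeg_Z : mdeg f = \max_(u <- Zs) degu u.
Proof.
rewrite /mdeg /Zs big_filter.
rewrite -(big_map (fun p : {ffun T -> nat} * rat => p.1) (fun u => mcoef f u != 0%R) degu).
by rewrite big_undup //; exact: maxnn.
Qed.

Lemma Z_uniq : uniq Zs.
Proof. by rewrite filter_uniq // undup_uniq. Qed.

Lemma Z_nz u : u \in Zs -> mcoef f u != 0%R.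
Proof. by rewrite mem_filter => /andP[]. Qed.

Lemma Z_vars u : u \in Zs -> forall v, v \notin S -> u v = 0%N.
Proof.
rewrite mem_filter mem_undup => /andP[_ /mapP[p pf ->]] v vS.
move/allP: hf => /(_ p pf) /forallP /(_ v) /implyP /(_ vS) /eqP //.
Qed.

Lemma entry_le_deg (u : {ffun T -> nat}) (v : T) : u v <= degu u.
Proof. by rewrite /degu (bigD1 v) //= leq_addr. Qed.

End Poly.

Lemma digits_inj bs n (dg dg' : 'I_n -> nat) : (forall r, dg r < bs) ->
  (forall r, dg' r < bs) ->
  \sum_(r < n) dg r * bs ^ r = \sum_(r < n) dg' r * bs ^ r -> dg =1 dg'.
Proof.
elim: n dg dg' => [|n IH] dg dg' h h' e; first by case.
move: e; rewrite !big_ord_recl /= !expn0 !muln1.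
have split : forall g : 'I_n.+1 -> nat,
    \sum_(i < n) g (lift ord0 i) * bs ^ bump 0 i = bs * \sum_(i < n) g (lift ord0 i) * bs ^ i.
  move=> g; rewrite big_distrr /=; apply: eq_bigr => i _.
  by rewrite /bump /= add1n expnS; ring.
rewrite !split => e.
have bs0 : 0 < bs by exact: leq_ltn_trans (leq0n _) (h ord0).
have e1 : (dg ord0 + bs * \sum_(i < n) dg (lift ord0 i) * bs ^ i) %% bs =
          (dg' ord0 + bs * \sum_(i < n) dg' (lift ord0 i) * bs ^ i) %% bs by rewrite e.
have e2 : (dg ord0 + bs * \sum_(i < n) dg (lift ord0 i) * bs ^ i) %/ bs =
          (dg' ord0 + bs * \sum_(i < n) dg' (lift ord0 i) * bs ^ i) %/ bs by rewrite e.
rewrite ![_ + bs * _]addnC ![bs * _]mulnC !modnMDl !modn_small // in e1.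
rewrite ![_ + bs * _]addnC ![bs * _]mulnC !divnMDl // !divn_small // !addn0 in e2.
have IH' := IH _ _ (fun r => h (lift ord0 r)) (fun r => h' (lift ord0 r)) e2.
move=> r; case: (unliftP ord0 r) => [r'|] ->; first exact: IH'.
exact: e1.
Qed.

Section Psi.
Variable T : finType.

Definition psi bs (u : {ffun T -> nat}) := \sum_v u v * bs ^ enum_rank v.

Lemma psi_ord bs (u : {ffun T -> nat}) :
  psi bs u = \sum_(r < #|T|) u (enum_val r) * bs ^ r.
Proof.
rewrite /psi (big_enum_val (A := T)) /=.
by apply: eq_bigr => r _; rewrite enum_valK.
Qed.

Lemma psi_inj bs (u u' : {ffun T -> nat}) : (forall v, u v < bs) ->
  (forall v, u' v < bs) -> psi bs u = psi bs u' -> u = u'.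
Proof.
move=> h h'; rewrite !psi_ord => e.
have := digits_inj (fun r => h (enum_val r)) (fun r => h' (enum_val r)) e => eq.
by apply/ffunP => v; rewrite -(enum_rankK v) eq.
Qed.

Lemma psi_le bs (u : {ffun T -> nat}) : 0 < bs -> psi bs u <= degu u * bs ^ #|T|.
Proof.
move=> bs0; rewrite /psi /degu big_distrl /=; apply: leq_sum => v _.
by rewrite leq_mul2l leq_pexp2l ?orbT // ltnW // ltn_ord.
Qed.

End Psi.

Section Mono.
Variables (T : finType) (S : {set T}).

Lemma mono_const (u : {ffun T -> nat}) (x : T -> nat) X :
  (forall v, v \in S -> x v = X) -> (forall v, v \notin S -> u v = 0%N) ->
  mono u x = (X%:R ^+ degu u)%R.
Proof.
move=> hx hu; rewrite /mono /degu -prodrXr; apply: eq_bigr => v _.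
case: (boolP (v \in S)) => vS; first by rewrite hx.
by rewrite hu // !expr0.
Qed.

Lemma mono_pow (u : {ffun T -> nat}) (x : T -> nat) (t : nat) (w : T -> nat) :
  (forall v, v \in S -> x v = t ^ w v) -> (forall v, v \notin S -> u v = 0%N) ->
  mono u x = (t%:R ^+ (\sum_v u v * w v))%R.
Proof.
move=> hx hu; rewrite /mono -prodrXr; apply: eq_bigr => v _.
case: (boolP (v \in S)) => vS; last by rewrite hu // mul0n !expr0.
by rewrite hx // natrX -exprM mulnC.
Qed.

End Mono.

Lemma seq_argmax (X : eqType) (s : seq X) (F : X -> nat) : s != [::] ->
  exists2 u, u \in s & forall u', u' \in s -> F u' <= F u.
Proof.
elim: s => // a s IH _; case: (eqVneq s [::]) => [->|ns].
  by exists a; rewrite ?mem_head // => u'; rewrite inE => /eqP ->.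
case: (IH ns) => b bs hb.
case: (leqP (F a) (F b)) => hab.
  exists b; first by rewrite inE bs orbT.
  by move=> u'; rewrite inE => /orP[/eqP ->|]; [|apply: hb].
exists a; first exact: mem_head.
move=> u'; rewrite inE => /orP[/eqP ->//|/hb h]; exact: leq_trans h (ltnW hab).
Qed.

Lemma ar_psi p du q e D : p <= du * q -> du * q <= e * q -> p < D.+1 * (e * q).+1.
Proof. nia. Qed.
Lemma ar_bsn e q : 1 <= e -> q <= (e * q).+1.
Proof. nia. Qed.
Lemma ar_keyi D e Y q : D < e -> q <= Y -> 0 < Y -> (D.+1 * Y + q) * D < e * (D.+1 * Y).
Proof.
move=> h1 h2 h3.
have h : D.+1 * (D.+1 * Y) <= e * (D.+1 * Y) by rewrite leq_mul2r h1 orbT.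
have h4 : q * D <= Y * D by rewrite leq_mul2r h2 orbT.
apply: leq_trans h; rewrite mulnDl; nia.
Qed.

Lemma leq_expb a b k : a <= b -> a ^ k <= b ^ k.
Proof. by move=> ab; elim: k => // k IH; rewrite !expnS leq_mul. Qed.

Section Final.
Variables (d : Order.disp_t) (T : finPOrderType d) (S : {set T}).
Hypothesis hS : forall a b, a \in S -> b \in S -> (a >=< b)%O.
Variables (m : T -> nat) (f : mpoly T).
Hypothesis hf : vars_in f S.
Hypothesis hrep : forall x : T -> nat, (forall i, i \notin S -> x i = m i) ->
            ((Lplus x)%:R = meval f x)%R.

Local Notation D := (Dsum S m).
Local Notation Z := (Zs f).
Local Notation c := (mcoef f).

Lemma deg_le_mdeg u : u \in Z -> degu u <= mdeg f.
Proof. by move=> uZ; rewrite mdeg_Z; exact: (leq_bigmax_seq _ uZ). Qed.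

Lemma ge_part : D <= mdeg f.
Proof.
rewrite leqNgt; apply/negP => heD.
have n0 : 0 < #|T|.
  case: (pickP (fun i : T => true)) => [i _|h0]; first by apply/card_gt0P; exists i.
  by move: heD; rewrite /Dsum big_pred0 // => i; have := h0 i.
have Kc0 : 0 < Kc m by rewrite /Kc /R0 muln_gt0 /= addn_gt0 n0 orbT.
set Mc := (\sum_(u <- Z) `|c u|)%R.
apply: (@growth 1 (Mc * (Kc m)%:R ^+ mdeg f) (mdeg f) ltr01) => B B0.
have hx : forall i, i \notin S -> xB S m B i = m i by move=> i iS; rewrite /xB (negbTE iS).
have eq1 := hrep hx.
have lb := LB hS m B0.
have ev : meval f (xB S m B) = (\sum_(u <- Z) c u * (tt m B)%:R ^+ degu u)%R.
  have hxS : forall v, v \in S -> xB S m B v = tt m B by move=> v vS; rewrite /xB vS.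
  rewrite meval_Z; apply: eq_big_seq => u uZ.
  by rewrite (mono_const hxS (Z_vars hf uZ)).
have tt1 : (1 <= (tt m B)%:R :> rat)%R by rewrite ler1n /tt muln_gt0 Kc0.
have ub : (meval f (xB S m B) <= Mc * (tt m B)%:R ^+ mdeg f)%R.
  rewrite ev /Mc big_distrl /=; apply: (le_trans (real_ler_norm (num_real _))).
  apply: (le_trans (ler_norm_sum _ _ _)); rewrite !big_seq; apply: ler_sum => u uZ.
  rewrite normrM normrX normr_nat; apply: ler_wpM2l => //.
  exact: ler_weXn2l (deg_le_mdeg uZ).
have : (B ^ (mdeg f).+1 <= Lplus (xB S m B))%N.
  exact: leq_trans (leq_pexp2l B0 heD) lb.
rewrite -(ler_nat rat) eq1 => h1; have := le_trans h1 ub.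
by rewrite mul1r /tt natrM exprMn mulrA natrX.
Qed.


Lemma le_part : mdeg f <= D.
Proof.
rewrite leqNgt; apply/negP => hDe.
have Zne : Z != [::].
  by apply/eqP => h; move: hDe; rewrite mdeg_Z h big_nil.
have ent : forall u, u \in Z -> forall v, u v < (mdeg f).+1.
  by move=> u uZ v; rewrite ltnS; exact: leq_trans (entry_le_deg u v) (deg_le_mdeg uZ).
case: (seq_argmax (fun u : {ffun T -> nat} => degu u) Zne) => u0 u0Z hu0.
have de0 : degu u0 = mdeg f.
  apply/eqP; rewrite eqn_leq deg_le_mdeg // mdeg_Z.
  by apply/bigmax_leqP_seq => u uZ _; exact: hu0.
set e := mdeg f in hDe ent de0 *.
set bs := e.+1; set n := #|T|; set Y := (e * bs ^ n).+1; set W0 := D.+1 * Y.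
pose w := fun v : T => W0 + bs ^ enum_rank v.
pose phi := fun u : {ffun T -> nat} => \sum_v u v * w v.
have phiE : forall u, phi u = degu u * W0 + psi bs u.
  move=> u; rewrite /phi /w /degu /psi big_distrl -big_split /=.
  by apply: eq_bigr => v _; rewrite mulnDr.
have bs0 : 0 < bs by [].
have psiY : forall u, u \in Z -> psi bs u < W0.
  move=> u uZ; have h1 := psi_le u bs0; have h2 := deg_le_mdeg uZ.
  rewrite -/e in h2; have : degu u * bs ^ n <= e * bs ^ n by rewrite leq_mul2r h2 orbT.
  exact: ar_psi h1.
have phi_inj : {in Z &, injective phi}.
  move=> u u' uZ u'Z; rewrite !phiE => h.
  have [_ ep] := divmod_eq (psiY u uZ) (psiY u' u'Z) h.
  exact: psi_inj (ent u uZ) (ent u' u'Z) ep.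
case: (seq_argmax phi Zne) => us usZ hus.
set P := phi us.
have P_ge : e * W0 <= P by rewrite -de0; apply: leq_trans (hus u0 u0Z); rewrite phiE leq_addr.
have wmax : forall v, w v <= W0 + bs ^ n.
  by move=> v; rewrite leq_add2l leq_pexp2l // ltnW // ltn_ord.
have bsn : bs ^ n <= Y.
  rewrite /Y; have e1 : 1 <= e by exact: leq_ltn_trans (leq0n D) hDe.
  exact: ar_bsn.
have keyi : (W0 + bs ^ n) * D < P.
  apply: leq_trans P_ge; exact: ar_keyi.
have P0 : 0 < P by exact: leq_ltn_trans (leq0n _) keyi.
set P1 := P.-1.
have PP : P = P1.+1 by rewrite /P1 prednK.
set cs := c us.
set Cu := 2 ^ #|{: T * 'I_(\max_i m i).+1 * (T * 'I_(\max_i m i).+1)}| * (n.+1) ^ D.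
set Mc := (\sum_(u <- Z) `|c u|)%R.
apply: (@growth `|cs|%R (Cu%:R + Mc)%R P1) => [|t t0].
  by rewrite normr_gt0; exact: Z_nz.
pose xt := fun v => if v \in S then t ^ w v else m v.
have hx : forall i, i \notin S -> xt i = m i by move=> i iS; rewrite /xt (negbTE iS).
have eq1 := hrep hx.
have ub := UB hS hx.
have NSb : NS S xt <= n * t ^ (W0 + bs ^ n).
  rewrite /NS /SA (eq_card (B := [pred a : lexsum_elt xt | tag a \in S])); last first.
    by move=> a; rewrite !inE.
  rewrite card_tag_pred /n -sum_nat_const big_mkcond /=; apply: leq_sum => v _.
  case: ifP => vS //; rewrite /xt.
  have -> : (v \in S) = true by exact: vS.
  by rewrite leq_pexp2l.
have Lb : Lplus xt <= Cu * t ^ P1.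
  apply: leq_trans ub _; rewrite /Cu -mulnA leq_mul2l; apply/orP; right.
  have h1 : (NS S xt).+1 <= n.+1 * t ^ (W0 + bs ^ n).
    have : 0 < t ^ (W0 + bs ^ n) by rewrite expn_gt0 t0.
    move: NSb; move: (NS S xt) (t ^ (W0 + bs ^ n)) => a b; nia.
  apply: (leq_trans (leq_expb D h1)) ; rewrite expnMn -expnM leq_mul2l; apply/orP; right.
  rewrite leq_pexp2l //; rewrite -ltnS -PP; exact: keyi.
have ev : meval f xt = (\sum_(u <- Z) c u * t%:R ^+ phi u)%R.
  have hxS : forall v, v \in S -> xt v = t ^ w v by move=> v vS; rewrite /xt vS.
  rewrite meval_Z; apply: eq_big_seq => u uZ.
  by rewrite (mono_pow hxS (Z_vars hf uZ)).
move: ev; rewrite (bigD1_seq us usZ (Z_uniq f)) /= -/cs -/P => ev.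
set rest := (\sum_(u <- Z | u != us) c u * t%:R ^+ phi u)%R in ev.
have restb : (`|rest| <= Mc * t%:R ^+ P1)%R.
  apply: (le_trans (ler_norm_sum _ _ _)); rewrite /Mc big_distrl /=.
  rewrite big_mkcond /= !big_seq; apply: ler_sum => u uZ.
  case: ifP => nu; last by rewrite mulr_ge0 ?exprn_ge0 ?ler0n.
  rewrite normrM normrX normr_nat ler_wpM2l //.
  apply: ler_weXn2l; first by rewrite ler1n.
  have h1 := hus u uZ; have h2 : phi u != P.
    by apply/eqP => h; move/negP: nu; apply; apply/eqP; exact: phi_inj.
  by rewrite -ltnS -PP ltn_neqAle h2 h1.
have mge : (0 <= meval f xt)%R by rewrite -eq1 ler0n.
have mle : (meval f xt <= Cu%:R * t%:R ^+ P1)%R.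
  by rewrite -eq1 -natrX -natrM ler_nat.
have : (cs * t%:R ^+ P = meval f xt - rest)%R by rewrite ev addrK.
rewrite PP => h; rewrite mulrDl -(normr_nat rat t) -normrX -normrM h.
apply: (le_trans (ler_normB _ _)).
rewrite (ger0_norm mge) normr_nat; exact: lerD mle restb.
Qed.

End Final.

Unset Implicit Arguments.

Theorem corollary5p5 (d : Order.disp_t) (T : finPOrderType d) (S : {set T})
  (hS : forall a b, a \in S -> b \in S -> (a >=< b)%O)
  (m : T -> nat) (f : mpoly T) (hf : vars_in f S)
  (hrep : forall x : T -> nat, (forall i, i \notin S -> x i = m i) ->
            ((Lplus x)%:R = meval f x)%R) :
  mdeg f = \sum_(i | [exists s in S, ~~ (i >=< s)%O]) m i.
Proof.
apply/eqP; rewrite eqn_leq; apply/andP; split.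
- exact: (le_part hS hf hrep).
- exact: (ge_part hS hf hrep).
Qed.
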